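(* Every $1$-Sperner hypergraph ${\cal H}=(V,{\cal E})$ with $V\neq\emptyset$ is $1$-decomposable, that is, it is the gluing of two $1$-Sperner hypergraphs.
   Context: A hypergraph ${\cal H}=(V,{\cal E})$ consists of a finite vertex set $V$ and a set ${\cal E}$ of subsets of $V$. It is $1$-Sperner if every two distinct hyperedges $e,f$ satisfy $\min\{|e\setminus f|,|f\setminus e|\}=1$. Given vertex-disjoint hypergraphs ${\cal H}_1=(V_1,{\cal E}_1)$, ${\cal H}_2=(V_2,{\cal E}_2)$ and a new vertex $z\notin V_1\cup V_2$, the gluing ${\cal H}_1\odot{\cal H}_2$ has vertex set $V_1\cup V_2\cup\{z\}$ and hyperedge set $\{\{z\}\cup e: e\in{\cal E}_1\}\cup\{V_1\cup e: e\in{\cal E}_2\}$. ${\cal H}$ is $z$-decomposable for a vertex $z$ if for all hyperedges $e,f$ with $z\in e\setminus f$ we have $e\setminus\{z\}\subseteq f$ (equivalently ${\cal H}$ is a gluing with new vertex $z$), and $1$-decomposable if it is $z$-decomposable for some vertex $z$. *)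

(* Defs.v *)
(* A hypergraph H = (V, E) is modelled by a finite type T
   (the vertex set V) together with E : {set {set T}} (the hyperedges). *)
From mathcomp Require Import all_boot.
Set Implicit Arguments. Unset Strict Implicit. Unset Printing Implicit Defensive.

Definition one_Sperner (T : finType) (E : {set {set T}}) : Prop :=
  forall e f, e \in E -> f \in E -> e != f ->
    minn #|e :\: f| #|f :\: e| = 1.

Definition z_decomposable (T : finType) (E : {set {set T}}) (z : T) : Prop :=
  forall e f, e \in E -> f \in E -> z \in e :\: f -> e :\ z \subset f.

Definition one_decomposable (T : finType) (E : {set {set T}}) : Prop :=
  exists z : T, z_decomposable E z.

(* Main.v *)
Require Import Defs.
From mathcomp Require Import all_boot.
From mathcomp Require Import zify.
Set Implicit Arguments. Unset Strict Implicit. Unset Printing Implicit Defensive.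

Lemma L1 (T : finType) (A B : {set T}) u y :
  #|A :\: B| = 1 -> u \in A -> u \notin B -> y \in A -> y != u -> y \in B.
Proof.
move=> h uA uB yA yu; apply/negPn/negP => yB.
have: #|[set u; y]| <= #|A :\: B|.
  apply: subset_leq_card; apply/subsetP => w /set2P [->|->]; apply/setDP; by split.
by rewrite cards2 eq_sym (negbTE yu) h.
Qed.

Lemma L2 (T : finType) (A B : {set T}) :
  #|A| <= #|B| -> minn #|A :\: B| #|B :\: A| = 1 -> #|A :\: B| = 1.
Proof.
move=> hle hm.
have e1 := cardsD A B; have e2 := cardsD B A.
rewrite setIC in e2.
have : #|A :&: B| <= #|A| by apply: subset_leq_card; apply: subsetIl.
have : #|A :&: B| <= #|B| by apply: subset_leq_card; apply: subsetIr.
lia.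
Qed.

Lemma L3 p q : minn p q = 1 -> 2 <= p -> q = 1.
Proof. lia. Qed.

Theorem theorem9 (T : finType) (E : {set {set T}}) :
  0 < #|T| -> one_Sperner E -> one_decomposable E.
Proof.
move=> hT hS.
have [t0 _] : exists t : T, true.
  by case/card_gt0P: hT => t _; exists t.
case: (set_0Vmem E) => [->|[m0 m0E]].
  by exists t0 => e f; rewrite inE.
case: (arg_minnP (fun s : {set T} => #|s|) m0E) => m mE hmin.
case: (set_0Vmem (E :\ m)) => [hE|[M0 M0E]].
  exists t0 => e f eE fE /setDP [ze zf].
  have : e \in [set m] by move: eE; rewrite -(setD1K mE) hE setU0.
  have : f \in [set m] by move: fE; rewrite -(setD1K mE) hE setU0.
  by rewrite !inE => /eqP fm /eqP em; move: zf; rewrite fm -em ze.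
case: (arg_maxnP (fun s : {set T} => #|s|) M0E) => M /setD1P [Mm ME] hmax.
have hM : forall f, f \in E -> f != m -> #|f| <= #|M|.
  by move=> f fE fm; apply: hmax; apply/setD1P.
have hL2m : forall f, f \in E -> f != m -> #|m :\: f| = 1.
  move=> f fE fm; apply: L2; first by apply: hmin.
  by apply: hS => //; rewrite eq_sym.
have /eqP/cards1P [z hz] := hL2m M ME Mm.
have : z \in m :\: M by rewrite hz set11.
move/setDP => [zm zM].
exists z => e f eE fE /setDP [ze zf].
have fm : f != m by apply/eqP => fm; move: zf; rewrite fm zm.
have hmf := hL2m f fE fm.
apply/subsetP => y /setD1P [yz ye].
case ym: (y \in m); first exact: (L1 hmf zm zf ym yz).
have em : e != m by apply/eqP => em; move: ye; rewrite em ym.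
case: (boolP (y \in f)) => // yf; exfalso.
have /eqP/cards1P [a ha] := hL2m e eE em.
have : a \in m :\: e by rewrite ha set11.
move/setDP => [am ae].
have az : a != z by apply/eqP => az; move: ae; rewrite az ze.
have af := L1 hmf zm zf am az.
have aM := L1 (hL2m M ME Mm) zm zM am az.
have eM : e != M by apply/eqP => eM; move: zM; rewrite -eM ze.
have heM : #|e :\: M| = 1 by apply: L2; [exact: hM | exact: hS].
have yM := L1 heM ze zM ye yz.
have ef : e != f by apply/eqP => ef; move: zf; rewrite -ef ze.
have hef : 2 <= #|e :\: f|.
  have <- : #|[set z; y]| = 2 by rewrite cards2 eq_sym yz.
  apply: subset_leq_card; apply/subsetP => w /set2P [->|->]; apply/setDP; by split.
have hfe : #|f :\: e| = 1 by apply: (L3 (hS e f eE fE ef) hef).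
have fsub : f \subset M.
  apply/subsetP => w wf.
  case we: (w \in e).
    apply: (L1 heM ze zM we); apply/eqP => wz; move: zf; by rewrite -wz wf.
  case: (eqVneq w a) => [->|wa] //.
  by have := L1 hfe af ae wf wa; rewrite we.
case: (eqVneq f M) => [fM|fM]; first by move: yf; rewrite fM yM.
have := hS f M fE ME fM.
have -> : f :\: M = set0 by apply/eqP; rewrite setD_eq0.
by rewrite cards0 min0n.
Qed.
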